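(* Every realizable vector is 1-realizable.
   Context: All graphs are finite, nonempty, and reflexive (every vertex has a loop). $N[v]$ is the closed neighborhood of $v$ (including $v$). For distinct $v,w$, $w$ strictly corners $v$ if $N[v]\subsetneq N[w]$; $v$ is then a strict corner. A vertex dominates a set if adjacent to all its vertices. Corner ranking: set $G^{(1)}=G$, $k=1$. If $G^{(k)}$ is a clique, give all its vertices rank $k$ and stop. Else if $G^{(k)}$ has no strict corners, give all its vertices rank $\infty$ and stop. Else give every strict corner of $G^{(k)}$ rank $k$, delete them to get $G^{(k+1)}$ (induced subgraph), increase $k$ and repeat. The corner rank is the largest rank of a vertex; $X_k$ is the set of rank-$k$ vertices; cop-win graphs are exactly those of finite corner rank. A graph of finite corner rank $\alpha$ is of type 1 if some (equivalently every) vertex of rank $\alpha$ dominates $V(G^{(\alpha-1)})$, and of type 0 otherwise. A vector is a finite list of positive integers; the rank cardinality vector is $(x_\alpha,\dots,x_1)$ with $x_k=|X_k|$. A vector is realizable if it is the rank cardinality vector of some cop-win graph, and 1-realizable if it is the rank cardinality vector of some cop-win graph of type 1. *)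

(* Defs.v *)
From mathcomp Require Import all_boot.
Set Implicit Arguments. Unset Strict Implicit. Unset Printing Implicit Defensive.

Definition graph (T : finType) (e : rel T) : Prop :=
  [/\ 0 < #|T|, reflexive e & symmetric e].

Section CornerRanking.
Variables (T : finType) (e : rel T).

Definition nbhd (S : {set T}) (v : T) : {set T} := [set w in S | e v w].

Definition strict_corner (S : {set T}) (v : T) : bool :=
  (v \in S) && [exists w in S, (w != v) && (nbhd S v \proper nbhd S w)].

Definition corners (S : {set T}) : {set T} := [set v | strict_corner S v].

Definition is_clique (S : {set T}) : bool := [forall v in S, forall w in S, e v w].

Definition corner_step (S : {set T}) : {set T} := S :\: corners S.

(* vertex set of G^(k), k >= 1;  G^(1) = G.  (Convention: G^(0) = G.)
   Once the procedure stops (clique, or no strict corners), corner_step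
   is the identity, so the sequence becomes constant. *)
Definition Gk (k : nat) : {set T} := iter k.-1 corner_step setT.

Definition ranked_at (k : nat) (v : T) : bool :=
  (v \in Gk k) && (is_clique (Gk k) || strict_corner (Gk k) v).

Definition has_rank (v : T) (k : nat) : bool :=
  [&& 0 < k, ranked_at k v & [forall j : 'I_k, (0 < (j : nat)) ==> ~~ ranked_at j v]].

Definition Xk (k : nat) : {set T} := [set v | has_rank v k].

Definition cop_win : Prop := forall v, exists k, has_rank v k.

Definition corner_rank_is (a : nat) : Prop :=
  [/\ cop_win, exists v, has_rank v a & forall v k, has_rank v k -> k <= a].

Definition rank_card_vector (a : nat) : seq nat := [seq #|Xk k| | k <- rev (iota 1 a)].

Definition dominates (v : T) (S : {set T}) : bool := [forall w in S, e v w].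

Definition type1 (a : nat) : Prop := exists v, has_rank v a && dominates v (Gk a.-1).

End CornerRanking.

Definition realizable (s : seq nat) : Prop :=
  exists (T : finType) (e : rel T), graph e /\
    exists a, corner_rank_is e a /\ rank_card_vector e a = s.

Definition one_realizable (s : seq nat) : Prop :=
  exists (T : finType) (e : rel T), graph e /\
    exists a, [/\ corner_rank_is e a, type1 e a & rank_card_vector e a = s].

(* Main.v *)
Require Import Defs.
From mathcomp Require Import all_boot.
From mathcomp Require Import zify.
Set Implicit Arguments. Unset Strict Implicit. Unset Printing Implicit Defensive.

Section Abstract.
Variables (T : finType) (e : rel T).
Hypothesis (erefl : reflexive e) (esym : symmetric e).
Implicit Types (S : {set T}) (v w : T).

Lemma GkS k : 0 < k -> Gk e k.+1 = corner_step e (Gk e k).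
Proof. by case: k => // k _; rewrite /Gk /= iterS. Qed.

Lemma in_corner_step S v : (v \in corner_step e S) = (v \in S) && ~~ strict_corner e S v.
Proof. by rewrite /corner_step /corners !inE andbC. Qed.

Lemma in_nbhd S v w : (w \in nbhd e S v) = (w \in S) && e v w.
Proof. by rewrite /nbhd inE. Qed.

Lemma GkS_sub k : Gk e k.+1 \subset Gk e k.
Proof.
case: k => [|k]; first by rewrite /Gk /= subxx.
rewrite GkS //; apply/subsetP=> v; rewrite in_corner_step; by case/andP.
Qed.

Lemma Gk_mono j k : j <= k -> Gk e k \subset Gk e j.
Proof.
move=> /subnKC <-; elim: (k - j) => [|i IH]; first by rewrite addn0 subxx.
by rewrite addnS; apply: subset_trans (GkS_sub _) IH.
Qed.

Lemma maxdom S v : v \in S ->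
  exists w, [/\ w \in S, nbhd e S v \subset nbhd e S w & ~~ strict_corner e S w].
Proof.
move=> vS.
pose P := fun w => (w \in S) && (nbhd e S v \subset nbhd e S w).
have Pv : P v by rewrite /P vS subxx.
case: (arg_maxnP (fun w => #|nbhd e S w|) Pv) => w /andP[wS vw] wmax.
exists w; split => //; apply/negP => /andP[_ /existsP[w' /andP[w'S /andP[_ pr]]]].
have : P w' by rewrite /P w'S (subset_trans vw (proper_sub pr)).
move=> /wmax H; move: (proper_card pr); rewrite ltnNge; move: H; rewrite /geq /= => ->; done.
Qed.

Lemma not_corner_Gk j v : 0 < j -> v \in Gk e j.+1 -> ~~ strict_corner e (Gk e j) v.
Proof. by move=> j0; rewrite GkS // in_corner_step => /andP[]. Qed.

Lemma corner_split k v : 0 < k -> v \in Gk e k -> v \notin Gk e k.+1 ->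
  strict_corner e (Gk e k) v.
Proof. by move=> k0 vk; rewrite GkS // in_corner_step vk /= negbK. Qed.

Lemma corner_in S v : strict_corner e S v -> v \in S.
Proof. by case/andP. Qed.

Lemma corner_dom S v : strict_corner e S v ->
  exists w, [/\ w \in S, e w v & ~~ strict_corner e S w].
Proof.
move=> cv; have vS := corner_in cv.
have [w [wS sub nc]] := maxdom vS.
exists w; split => //.
have : v \in nbhd e S v by rewrite in_nbhd vS erefl.
by move/(subsetP sub); rewrite in_nbhd esym => /andP[].
Qed.

Section Rank.
Variable a : nat.
Hypothesis Hcr : corner_rank_is e a.

Lemma cr_v0 : exists v0, has_rank e v0 a.
Proof. by case: Hcr. Qed.

Lemma a_pos : 0 < a.
Proof. by case: cr_v0 => v0 /and3P[]. Qed.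

Lemma notclique_lt j : 0 < j -> j < a -> ~~ is_clique e (Gk e j).
Proof.
move=> j0 ja; case: cr_v0 => v0 /and3P[_ ra /forallP /(_ (Ordinal ja))].
rewrite j0 /= /ranked_at negb_and => /orP[] .
  by move: ra => /andP[] /(subsetP (Gk_mono (ltnW ja))) ->.
by rewrite negb_or => /andP[].
Qed.

Lemma clique_a : is_clique e (Gk e a).
Proof.
case: Hcr => cw [v0 rv0] amax.
move: (rv0) => /and3P[a0 /andP[v0a _] _].
apply/negPn/negP => ncl.
have [w [wa _ nc]] := maxdom v0a.
have wa1 : w \in Gk e a.+1 by rewrite GkS // in_corner_step wa nc.
case: (cw w) => k rk; have ka := amax _ _ rk.
move: rk => /and3P[k0 /andP[wk /orP[cl|cor]] _].
  have : k < a by rewrite ltn_neqAle ka andbT; apply/eqP => ek; move: cl; rewrite ek (negbTE ncl).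
  by move=> kla; move: (notclique_lt k0 kla); rewrite cl.
have : w \in Gk e k.+1 by apply: (subsetP (Gk_mono _)) wa1.
by rewrite GkS // in_corner_step cor andbF.
Qed.

Lemma top_rank v : v \in Gk e a -> has_rank e v a.
Proof.
move=> va; rewrite /has_rank a_pos /ranked_at va clique_a /=.
apply/forallP => j; apply/implyP => j0.
rewrite /ranked_at negb_and negb_or (notclique_lt j0 (ltn_ord j)) /=.
apply/orP; right; apply: not_corner_Gk => //.
by apply: (subsetP (Gk_mono (ltn_ord j))).
Qed.

Lemma corner_rank k v : 0 < k -> k < a -> strict_corner e (Gk e k) v -> has_rank e v k.
Proof.
move=> k0 ka cv; rewrite /has_rank k0 /ranked_at (corner_in cv) cv orbT /=.
apply/forallP => j; apply/implyP => j0.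
rewrite /ranked_at negb_and negb_or (notclique_lt j0 (ltn_trans (ltn_ord j) ka)) /=.
apply/orP; right; apply: not_corner_Gk => //.
by apply: (subsetP (Gk_mono (ltn_ord j))) (corner_in cv).
Qed.

Lemma Gk_const k i : corners e (Gk e k) = set0 -> 0 < k -> Gk e (k + i) = Gk e k.
Proof.
move=> c0 k0; elim: i => [|i IH]; first by rewrite addn0.
rewrite addnS GkS ?IH; last by rewrite addn_gt0 k0.
by rewrite /corner_step c0 setD0.
Qed.

Lemma corner_exists k : 0 < k -> k < a -> exists v, strict_corner e (Gk e k) v.
Proof.
move=> k0 ka; case: (boolP [exists v, strict_corner e (Gk e k) v]) => [/existsP//|/existsPn H].
have c0 : corners e (Gk e k) = set0.
  by apply/setP => v; rewrite /corners !inE (negbTE (H v)).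
move: (Gk_const (a - k) c0 k0); rewrite subnKC ?(ltnW ka) // => Ea.
by move: (notclique_lt k0 ka); rewrite -Ea clique_a.
Qed.

Lemma nth_rcv i : i < a -> nth 0 (rank_card_vector e a) i = #|Xk e (a - i)|.
Proof.
move=> ia; rewrite /rank_card_vector (nth_map 0); last by rewrite size_rev size_iota.
rewrite nth_rev ?size_iota // nth_iota; last by rewrite ltn_subrL a_pos.
by congr (#|Xk e _|); lia.
Qed.

Lemma size_rcv : size (rank_card_vector e a) = a.
Proof. by rewrite /rank_card_vector size_map size_rev size_iota. Qed.

Hypothesis nt : ~ type1 e a.

Lemma dom_top w : w \in Gk e a ->
  (forall c, strict_corner e (Gk e a.-1) c -> e w c) -> False.
Proof.
move=> wa H; apply: nt; exists w; rewrite top_rank //=.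
apply/forallP => y; apply/implyP => yH.
case: (boolP (y \in Gk e a)) => ya.
  by move: clique_a => /forallP/(_ w)/implyP/(_ wa)/forallP/(_ y)/implyP/(_ ya).
apply: H; move: (a_pos) ya yH; case: a => [//|[|a']] _.
  by rewrite /Gk /= inE.
by move=> ya yH; apply: corner_split.
Qed.

Lemma a_ge2 : 1 < a.
Proof.
case: cr_v0 => v0 /and3P[_ /andP[v0a _] _].
rewrite ltn_neqAle a_pos andbT; apply/negP => /eqP a1.
apply: (dom_top v0a) => c /corner_in.
by rewrite -a1 /= => _; move: clique_a v0a; rewrite -a1 => /forallP/(_ v0)/implyP H /H /forallP/(_ c)/implyP; apply; rewrite /Gk inE.
Qed.

Lemma card_top : 1 < #|Xk e a|.
Proof.
case: cr_v0 => v0 rv0.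
rewrite ltnNge; apply/negP => /card_le1_eqP H.
apply: (dom_top (w := v0)); first by case/and3P: rv0 => _ /andP[].
move=> c cc; have [w [wH ewc nc]] := corner_dom cc.
have wa : w \in Gk e a.
  by move: wH nc; move: a_ge2; case: a => [|[|a']] // _ wH nc; rewrite GkS // in_corner_step wH.
have -> : v0 = w by apply: H; rewrite inE ?rv0 ?top_rank.
exact: ewc.
Qed.

Lemma card_c : 1 < #|Xk e a.-1|.
Proof.
rewrite ltnNge; apply/negP => /card_le1_eqP H.
have a2 := a_ge2.
have [c cc] : exists c, strict_corner e (Gk e a.-1) c.
  by apply: corner_exists; move: a2; case: a => [|[|a']].
have [w [wH ewc nc]] := corner_dom cc.
have wa : w \in Gk e a.
  by move: wH nc; move: a2; case: a => [|[|a']] // _ wH nc; rewrite GkS // in_corner_step wH.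
apply: (dom_top wa) => c' cc'.
have -> : c' = c; last exact: ewc.
apply: H; rewrite inE; apply: corner_rank => //; by move: a2; case: a => [|[|a']].
Qed.

Lemma card_b : 2 < a -> 1 < #|Xk e (a - 2)|.
Proof.
move=> a3; rewrite ltnNge; apply/negP => /card_le1_eqP H.
set S := Gk e (a - 2).
have HS : Gk e a.-1 = corner_step e S.
  by rewrite /S -GkS; [congr (Gk e _); lia | lia].
have HHa : Gk e a = corner_step e (Gk e a.-1).
  by rewrite -GkS; [congr (Gk e _); lia | lia].
have [p cp] : exists p, strict_corner e S p by apply: corner_exists; lia.
have pX : p \in Xk e (a - 2) by rewrite inE; apply: corner_rank => //; lia.
have allp : forall y, y \in S -> y \notin Gk e a.-1 -> y = p.
  move=> y yS yH; apply: H => //; rewrite inE; apply: corner_rank; try lia.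
  by rewrite /S in yS *; apply: corner_split => //; [lia| rewrite (_ : (a-2).+1 = a.-1) //; lia].
have HsubS : Gk e a.-1 \subset S by rewrite HS /corner_step subDset subsetUr.
have pc : forall c, strict_corner e (Gk e a.-1) c -> e p c.
  move=> c cc; apply/negPn/negP => npc.
  have cH := corner_in cc.
  have : ~~ strict_corner e S c by move: cH; rewrite HS in_corner_step => /andP[].
  move/negP; apply.
  move: cc => /andP[_ /existsP[w0 /andP[w0H /andP[w0c pr]]]].
  rewrite /strict_corner (subsetP HsubS _ cH) /=; apply/existsP; exists w0.
  rewrite (subsetP HsubS _ w0H) w0c /=.
  have eqn : nbhd e S c = nbhd e (Gk e a.-1) c.
    apply/setP => y; rewrite !in_nbhd.
    case: (boolP (y \in Gk e a.-1)) => yH; first by rewrite (subsetP HsubS _ yH).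
    case: (boolP (y \in S)) => yS //=.
    by rewrite (allp _ yS yH) esym (negbTE npc).
  rewrite eqn; apply: (proper_sub_trans pr); apply/subsetP => y.
  by rewrite !in_nbhd => /andP[/(subsetP HsubS) -> ->].
have [z [zS psub nz]] := maxdom (corner_in cp).
have zH : z \in Gk e a.-1 by rewrite HS in_corner_step zS nz.
have zc : forall c, strict_corner e (Gk e a.-1) c -> e z c.
  move=> c cc.
  have : c \in nbhd e S p by rewrite in_nbhd (subsetP HsubS _ (corner_in cc)) pc.
  by move/(subsetP psub); rewrite in_nbhd => /andP[].
case: (boolP (z \in Gk e a)) => za; first exact: (dom_top za zc).
have czH : strict_corner e (Gk e a.-1) z.
  apply: corner_split => //; first lia.
have [w [wH wsub nw]] := maxdom zH.
have wa : w \in Gk e a by rewrite HHa in_corner_step wH nw.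
apply: (dom_top wa) => c cc.
have : c \in nbhd e (Gk e a.-1) z by rewrite in_nbhd (corner_in cc) zc.
by move/(subsetP wsub); rewrite in_nbhd => /andP[].
Qed.
End Rank.

End Abstract.

Definition adjo (u v : nat) : bool :=
  [|| (u == 0) && (v == 1), (u < 2) && (2 <= v) && (v < 4),
      (2 <= u) && (u < 4) && (4 <= v) && (v < 6),
      (u == 0) && (v == 4), (u == 1) && (v == 5),
      (3 <= u) && (u < 6) && (v == 6) | (6 <= u) && (v == u.+1)].
Definition E (u v : nat) : bool := [|| u == v, adjo u v | adjo v u].
Definition domb (M u w : nat) : bool := all (fun r => E u r ==> E w r) (iota 0 M.+1).

Lemma dombP M u w : reflect (forall r, r <= M -> E u r -> E w r) (domb M u w).
Proof.
apply: (iffP allP) => H r.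
  move=> rM; apply/implyP; apply: H; by rewrite mem_iota /= add0n ltnS.
by rewrite mem_iota /= add0n ltnS => rM; apply/implyP; apply: H.
Qed.

Definition RL1b M m := all (fun u => has (fun w => domb M u w && ~~ domb M w u) (iota 0 M.+1)) (iota m.+1 (M - m)).
Definition RL2b M m := all (fun u => all (fun w => domb M u w ==> domb M w u) (iota 0 M.+1)) (iota 0 m.+1).

Lemma RLs1 : RL1b 3 1. Proof. by vm_compute. Qed.
Lemma RLs2 : RL1b 5 3. Proof. by vm_compute. Qed.
Lemma RLs3 : RL1b 6 5. Proof. by vm_compute. Qed.
Lemma RLs4 : RL2b 3 1. Proof. by vm_compute. Qed.
Lemma RLs5 : RL2b 5 3. Proof. by vm_compute. Qed.
Lemma RLs6 : RL2b 6 5. Proof. by vm_compute. Qed.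

Lemma Esym u v : E u v = E v u.
Proof. by rewrite /E eq_sym; case: (v == u); case: (adjo u v); case: (adjo v u). Qed.
Lemma Erefl u : E u u.
Proof. by rewrite /E eqxx. Qed.

Lemma not_domb M u w r : r <= M -> E u r -> ~~ E w r -> ~~ domb M u w.
Proof. move=> rM eu ew; apply/dombP => H; by move: (H r rM eu); rewrite (negbTE ew). Qed.

Lemma big_adj u w : 7 <= u -> E w u -> [|| w == u, w == u.-1 | w == u.+1].
Proof. rewrite /E /adjo; lia. Qed.

Lemma small_far u w : u <= 6 -> 9 <= w -> ~~ E w u.
Proof. rewrite /E /adjo; lia. Qed.

Definition smallchk := all (fun u => all (fun w => [|| w == u, ~~ E w u |
   has (fun r => E u r && ~~ E w r) (iota 0 8)]) (iota 0 9)) (iota 0 7).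
Lemma smallchk_ok : smallchk. Proof. by vm_compute. Qed.

Lemma E_succ n : 6 <= n -> E n n.+1.
Proof. by move=> n6; rewrite /E /adjo n6 eqxx /= !orbT. Qed.

Lemma E_far n : 6 <= n -> ~~ E n n.+2.
Proof. move=> n6; rewrite /E /adjo; lia. Qed.

Lemma RL2_big M u w : 7 <= M -> u <= M.-1 -> w <= M -> domb M u w -> domb M w u.
Proof.
move=> M7 uM wM d.
case: (eqVneq w u) => [->|wu]; first by apply/dombP.
case: (boolP (E w u)) => ewu; last by move: d; rewrite (negbTE (not_domb (leq_trans uM (leq_pred M)) (Erefl u) ewu)).
exfalso; move: d; apply/negP.
case: (leqP u 6) => u6.
  case: (leqP w 8) => w8; last by move: ewu; rewrite (negbTE (small_far u6 w8)).
  move: smallchk_ok; rewrite /smallchk => /allP/(_ u); rewrite mem_iota leq0n add0n ltnS u6 => /(_ isT).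
  move=> /allP/(_ w); rewrite mem_iota leq0n add0n ltnS w8 => /(_ isT).
  rewrite (negbTE wu) ewu => /orP[//|/orP[//|/hasP[r]]]; rewrite mem_iota leq0n add0n => r8 /andP[eur ewr].
  by apply: (not_domb (r := r)) => //; lia.
have := big_adj u6 ewu; rewrite (negbTE wu) /= => /orP[] /eqP wE.
  apply: (not_domb (r := u.+1)); first lia.
    exact: E_succ (ltnW u6).
  rewrite wE; case: u u6 {uM wE wu ewu} => // n n6 /=; apply: E_far; lia.
apply: (not_domb (r := u.-1)); first lia.
  rewrite Esym; case: u u6 {uM wE wu ewu} => // n n6 /=; apply: E_succ; lia.
rewrite wE; case: u u6 {uM wE wu ewu} => // n n6 /=; rewrite Esym; apply: E_far; lia.
Qed.

Lemma RL1_big M : 7 <= M -> exists w, [/\ w <= M, domb M M w & ~~ domb M w M].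
Proof.
move=> M7; exists M.-1; split; first exact: leq_pred.
  apply/dombP => r rM; rewrite Esym => /(big_adj M7) /or3P[/eqP->|/eqP->|/eqP rE].
  - case: M M7 {rM} => // n n7 /=; apply: E_succ; lia.
  - exact: Erefl.
  - by move: rM; rewrite rE ltnn.
case: (eqVneq M 7) => [->|M8]; first by vm_compute.
case: M M7 M8 => // n n7 n8; apply: (not_domb (r := n.-1)); first lia.
  case: n n7 n8 => // m m7 m8; rewrite /= Esym; apply: E_succ; lia.
case: n n7 n8 => // m m7 m8; rewrite /= Esym; apply: E_far; lia.
Qed.

Definition Rb (l : nat) : nat := if l <= 2 then (2 * l).+1 else l + 3.

Lemma RL1b_ok M m u : RL1b M m -> m < u -> u <= M ->
  exists w, [/\ w <= M, domb M u w & ~~ domb M w u].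
Proof.
move=> /allP/(_ u) H mu uM; have : u \in iota m.+1 (M - m) by rewrite mem_iota mu /=; lia.
move/H => /hasP[w]; rewrite mem_iota leq0n add0n ltnS => wM /andP[d nd].
by exists w.
Qed.

Lemma RL2b_ok M m u w : RL2b M m -> u <= m -> w <= M -> domb M u w -> domb M w u.
Proof.
move=> /allP/(_ u) H um wM; have : u \in iota 0 m.+1 by rewrite mem_iota leq0n add0n ltnS.
move/H => /allP/(_ w); rewrite mem_iota leq0n add0n ltnS => /(_ wM) /implyP; exact.
Qed.

Lemma RL1 l u : 0 < l -> Rb l.-1 < u -> u <= Rb l ->
  exists w, [/\ w <= Rb l, domb (Rb l) u w & ~~ domb (Rb l) w u].
Proof.
case: l => // [[|[|[|l]]]] _; rewrite /Rb /=.
- exact: RL1b_ok RLs1.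
- exact: RL1b_ok RLs2.
- exact: RL1b_ok RLs3.
- move=> lu ul; have -> : u = l.+4 + 3 by lia.
  apply: RL1_big; lia.
Qed.

Lemma RL2 l u w : 0 < l -> u <= Rb l.-1 -> w <= Rb l ->
  domb (Rb l) u w -> domb (Rb l) w u.
Proof.
case: l => // [[|[|[|l]]]] _; rewrite /Rb /=.
- exact: RL2b_ok RLs4.
- exact: RL2b_ok RLs5.
- exact: RL2b_ok RLs6.
- move=> ul wl; apply: RL2_big => //; lia.
Qed.

Section Construct.
Variable s : seq nat.
Hypotheses (spos : all (fun x => 0 < x) s) (sa : 1 < size s)
  (s0 : 1 < nth 0 s 0) (s1 : 1 < nth 0 s 1) (s2 : 2 < size s -> 1 < nth 0 s 2).

Definition NN := (sumn s).+1.
Definition vtx := {p : 'I_(size s) * 'I_NN | p.2 < nth 0 s p.1}.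

Definition lay (p : vtx) : nat := (val p).1.
Definition cpy (p : vtx) : nat := (val p).2.
Definition role (p : vtx) : nat := if lay p <= 2 then 2 * lay p + (cpy p != 0) else lay p + 3.
Definition ee : rel vtx := fun p q => E (role p) (role q).

Lemma nth_pos i : i < size s -> 0 < nth 0 s i.
Proof. by move=> si; move/all_nthP: spos; apply. Qed.

Lemma nth_sumn i : nth 0 s i <= sumn s.
Proof.
elim: s i => [|x t IH] [|i] //=; first exact: leq_addr.
exact: leq_trans (IH i) (leq_addl _ _).
Qed.

Lemma lay_lt p : lay p < size s. Proof. exact: ltn_ord. Qed.

Lemma role_le p l : (lay p <= l) = (role p <= Rb l).
Proof.
rewrite /role /Rb; case: (cpy p != 0); case: ifP; case: ifP; lia.
Qed.

Lemma rep l r : l < size s -> r <= Rb l -> exists p : vtx, role p = r.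
Proof.
move=> ls rl.
pose L := if r < 6 then r %/ 2 else r - 3.
pose c := if r < 6 then r %% 2 else 0.
have hL : L < size s.
  move: rl; rewrite /L /Rb; case: ifP; case: ifP; lia.
have hcs : c < nth 0 s L.
  rewrite /c /L; case: ifP => r6.
    have hL' : r %/ 2 < size s by move: hL; rewrite /L r6.
    case: (r %% 2 =P 0) => [->|rm]; first exact: nth_pos.
    have -> : r %% 2 = 1 by lia.
    have : r %/ 2 <= 2 by lia.
    move: (r %/ 2) hL' => [|[|[|k]]] // hL' _.
    exact: s2.
  by apply: nth_pos; move: hL; rewrite /L r6.
have hc : c < NN by rewrite /NN ltnS; apply: leq_trans (nth_sumn L); exact: ltnW.
exists (exist _ (Ordinal hL, Ordinal hc) hcs).
rewrite /role /lay /cpy /= /L /c.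
case: (ltnP r 6) => r6.
  have -> : r %/ 2 <= 2 by lia.
  by case: (r %% 2 =P 0) => h; rewrite ?h /=; lia.
have -> : (r - 3 <= 2) = false by lia.
lia.
Qed.

Definition SS l := [set p : vtx | lay p <= l].

Lemma nbhd_sub l p q : l < size s ->
  (nbhd ee (SS l) p \subset nbhd ee (SS l) q) = domb (Rb l) (role p) (role q).
Proof.
move=> ls; apply/idP/idP.
  move=> sub; apply/dombP => r rl epr.
  have [x rx] := rep ls rl.
  have : x \in nbhd ee (SS l) p by rewrite /nbhd inE /ee rx epr inE role_le rx rl.
  by move/(subsetP sub); rewrite /nbhd inE /ee rx => /andP[].
move/dombP => H; apply/subsetP => y; rewrite /nbhd !inE => /andP[yl epy].
by rewrite yl /ee H // -role_le.
Qed.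

Lemma corner_SS l p : 0 < l -> l < size s -> strict_corner ee (SS l) p = (lay p == l).
Proof.
move=> l0 ls; apply/idP/idP.
  case/andP => pS /existsP[q /andP[qS /andP[qp pr]]].
  move: pS qS; rewrite !inE => pl ql.
  rewrite eqn_leq pl /=; apply/negP => plt.
  move: pr; rewrite /proper !nbhd_sub // => /andP[d nd].
  move/negP: nd; apply; apply: RL2 d => //.
    by rewrite -role_le; lia.
  by rewrite -role_le.
move/eqP => pl.
have [w [wl d nd]] : exists w, [/\ w <= Rb l, domb (Rb l) (role p) w & ~~ domb (Rb l) w (role p)].
  apply: RL1 => //; last by rewrite -role_le pl.
  rewrite ltnNge -role_le; lia.
have [q rq] := rep ls wl.
rewrite /strict_corner inE pl leqnn /=; apply/existsP; exists q.
rewrite inE role_le rq wl /=; apply/andP; split.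
  by apply/eqP => qp; move: nd d; rewrite -rq qp => /negbTE ->.
by rewrite /proper !nbhd_sub // rq d nd.
Qed.

Lemma Gk_SS k : 0 < k -> k <= size s -> Gk ee k = SS (size s - k).
Proof.
elim: k => // [[|k]] IH _ ks.
  by apply/setP => p; rewrite /Gk /= !inE; move: (lay_lt p); lia.
have k1 : 0 < k.+1 by [].
have ks' : k.+1 <= size s by apply: ltnW.
rewrite (GkS _ k1) (IH k1 ks'); apply/setP => p.
have ek : size s - k.+1 = (size s - k.+2).+1 by lia.
rewrite in_corner_step !inE corner_SS ek; first by rewrite andbC -ltn_neqAle ltnS.
  by [].
by rewrite -ek; lia.
Qed.

Lemma clique_SS l : l < size s -> is_clique ee (SS l) = (l == 0).
Proof.
move=> ls; case: l ls => [|l] ls /=.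
  apply/forallP => p; apply/implyP; rewrite inE => p0.
  apply/forallP => q; apply/implyP; rewrite inE => q0.
  rewrite /ee; move: p0 q0; rewrite !role_le /Rb /=.
  by case: (role p) => [|[|[|]]] //; case: (role q) => [|[|[|]]].
have [x rx] := rep ls (r := 2) (ltac:(rewrite /Rb; case: ifP; lia)).
have [y ry] := rep ls (r := 3) (ltac:(rewrite /Rb; case: ifP; lia)).
have hx : x \in SS l.+1 by rewrite inE role_le rx /Rb; case: ifP => _; lia.
have hy : y \in SS l.+1 by rewrite inE role_le ry /Rb; case: ifP => _; lia.
apply/negP => /forallP/(_ x)/implyP/(_ hx)/forallP/(_ y)/implyP/(_ hy).
by rewrite /ee rx ry.
Qed.


Lemma size_pos : 0 < size s. Proof. exact: ltnW sa. Qed.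

Lemma ranked_lo j p : 0 < j -> j <= size s -> ranked_at ee j p = (j == size s - lay p).
Proof.
move=> j0 js; have lp := lay_lt p.
have hl : size s - j < size s by lia.
rewrite /ranked_at (Gk_SS j0 js) inE (clique_SS hl).
case: (eqVneq (size s - j) 0) => h.
  by rewrite h orTb andbT; lia.
rewrite orFb corner_SS; [|lia|lia].
case: (eqVneq (lay p) (size s - j)) => e1; rewrite ?e1 ?leqnn /=; lia.
Qed.

Lemma has_rankE p k : has_rank ee p k = (k == size s - lay p).
Proof.
have lp := lay_lt p.
apply/idP/idP.
  case/and3P => k0 rk H; case: (leqP k (size s)) => ks.
    by rewrite -ranked_lo.
  have hj : size s - lay p < k by lia.
  move/forallP: H => /(_ (Ordinal hj)) /implyP /=.
  have -> : 0 < size s - lay p by lia.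
  by rewrite ranked_lo ?eqxx //; [move=> /(_ isT) | lia | lia].
move/eqP => ->; rewrite /has_rank ranked_lo ?eqxx //; try lia.
have -> : 0 < size s - lay p by lia.
apply/forallP => j; apply/implyP => j0; have jl := ltn_ord j.
rewrite ranked_lo //; lia.
Qed.

Lemma XkE k : Xk ee k = [set p | k == size s - lay p].
Proof. by apply/setP => p; rewrite !inE has_rankE. Qed.

Lemma card_layer i (hi : i < size s) : #|[set p : vtx | lay p == i]| = nth 0 s i.
Proof.
have hN : forall j : 'I_(nth 0 s i), j < NN.
  by move=> j; rewrite /NN ltnS; apply: leq_trans (ltnW (ltn_ord j)) (nth_sumn i).
pose f (j : 'I_(nth 0 s i)) : vtx :=
  exist (fun p : 'I_(size s) * 'I_NN => p.2 < nth 0 s p.1) (Ordinal hi, Ordinal (hN j)) (ltn_ord j).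
have finj : injective f.
  move=> j1 j2 /(congr1 cpy); rewrite /cpy /= => h; exact: val_inj.
have -> : [set p : vtx | lay p == i] = f @: setT.
  apply/setP => p; rewrite inE; apply/eqP/imsetP.
    case: p => [[x y] /= py] xi; rewrite /lay /= in xi.
    have yi : y < nth 0 s i by rewrite -xi.
    exists (Ordinal yi) => //; apply: val_inj => /=.
    by congr pair; apply: val_inj.
  by case=> j _ ->.
by rewrite card_imset // cardsT card_ord.
Qed.

Lemma rcv_ok : rank_card_vector ee (size s) = s.
Proof.
rewrite /rank_card_vector; apply: (@eq_from_nth _ 0); rewrite ?size_map size_rev size_iota // => i hi.
rewrite (nth_map 0) ?size_rev ?size_iota // nth_rev ?size_iota // nth_iota; last lia.
rewrite XkE -(card_layer hi); apply: eq_card => p; rewrite !inE.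
move: (lay_lt p); lia.
Qed.

Lemma top_vtx : exists v : vtx, role v = 0 /\ lay v = 0.
Proof.
have [v rv] := rep (l := 0) (r := 0) size_pos isT.
by exists v; split => //; apply/eqP; rewrite -leqn0 role_le rv.
Qed.

Lemma construct_ok : one_realizable s.
Proof.
have [v0 [rv0 lv0]] := top_vtx.
exists vtx, ee; split.
  split; first by apply/card_gt0P; exists v0.
    by move=> p; exact: Erefl.
  by move=> p q; rewrite /ee Esym.
exists (size s); split; last exact: rcv_ok.
  split.
  - by move=> v; exists (size s - lay v); rewrite has_rankE.
  - by exists v0; rewrite has_rankE lv0 subn0.
  - by move=> v k; rewrite has_rankE => /eqP ->; exact: leq_subr.
exists v0; rewrite has_rankE lv0 subn0 eqxx /=.
have h1 : 0 < (size s).-1 by lia.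
have h2 : (size s).-1 <= size s by exact: leq_pred.
rewrite (Gk_SS h1 h2) (_ : size s - (size s).-1 = 1); last lia.
apply/forallP => w; apply/implyP; rewrite inE role_le /Rb /= /ee rv0.
by case: (role w) => [|[|[|[|]]]].
Qed.

End Construct.

Theorem lemma3p21 (s : seq nat) :
  all (fun x => 0 < x) s -> realizable s -> one_realizable s.
Proof.
move=> spos [T [e [[T0 er es] [a [cr vs]]]]].
case: (boolP [exists v, has_rank e v a && dominates e v (Gk e a.-1)]) => [/existsP[v hv]|nt].
  exists T, e; split; first by split.
  by exists a; split => //; exists v.
have nt' : ~ type1 e a by move=> [v hv]; move/negP: nt; apply; apply/existsP; exists v.
have a2 := a_ge2 cr nt'.
have sz : size s = a by rewrite -vs size_rcv.
apply: construct_ok => //.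
- by rewrite sz.
- by rewrite -vs (nth_rcv cr) ?subn0 ?(card_top er es cr nt') //; lia.
- by rewrite -vs (nth_rcv cr) ?subn1; [exact: (card_c er es cr nt') | lia].
- rewrite sz => a3; rewrite -vs (nth_rcv cr); [exact: (card_b es cr nt') | lia].
Qed.
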